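(* Let $X$ be a $C^*$-correspondence over $A$ with left action $\phi$, and let $Y=X\oplus T$ over $B=A\oplus T$ be formed by adding the tail $T=(\ker\phi)^{(\mathbb N)}$. Let $(\tilde\pi,\tilde t)$ be a representation of $Y$ in a $C^*$-algebra that is coisometric on the ideal $\ker\phi\oplus T$ of $B$ (i.e. $\tilde\pi^{(1)}(\phi_B(b))=\tilde\pi(b)$ for all $b\in\ker\phi\oplus T$), and suppose that $a\mapsto\tilde\pi(a,\vec 0)$ is injective on $A$. For $f\in\ker\phi$ and $i\in\mathbb N$ let $\epsilon_i(f)\in T$ be the sequence with $f$ in the $i$-th position and $0$ elsewhere. Then for every $i\in\mathbb N$ and $f\in\ker\phi$, $\tilde\pi(0,\epsilon_i(f))=0$ implies $f=0$.
   Context: A $C^*$-correspondence over $A$ is a right Hilbert $A$-module $X$ with inner product $\langle\cdot,\cdot\rangle_A$ and a $*$-homomorphism $\phi:A\to\mathcal L(X)$; $\Theta_{\xi,\eta}(\zeta)=\xi\langle\eta,\zeta\rangle_A$, $\mathcal K(X)=\overline{\mathrm{span}}\{\Theta_{\xi,\eta}\}$. A representation of a correspondence $Y$ over $B$ in a $C^*$-algebra $C$ is a pair $(\tilde\pi,\tilde t)$ with $\tilde\pi:B\to C$ a $*$-homomorphism and $\tilde t:Y\to C$ linear such that $\tilde t(y)^*\tilde t(y')=\tilde\pi(\langle y,y'\rangle_B)$, $\tilde t(\phi_B(b)y)=\tilde\pi(b)\tilde t(y)$, $\tilde t(yb)=\tilde t(y)\tilde\pi(b)$; $\tilde\pi^{(1)}:\mathcal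 K(Y)\to C$ is the $*$-homomorphism with $\tilde\pi^{(1)}(\Theta_{y,y'})=\tilde t(y)\tilde t(y')^*$. Adding the tail: $T:=(\ker\phi)^{(\mathbb N)}$ is the $c_0$-direct sum of copies of $\ker\phi$ (elements $\vec f=(f_1,f_2,\dots)$, coordinatewise operations), a Hilbert module over itself with $\langle\vec f,\vec g\rangle=\vec f^*\vec g$; $B:=A\oplus T$, $Y:=X\oplus T$ with $(\xi,\vec f)(a,\vec g)=(\xi a,\vec f\vec g)$, $\langle(\xi,\vec f),(\nu,\vec g)\rangle_B=(\langle\xi,\nu\rangle_A,\vec f^*\vec g)$, $\phi_B(a,\vec f)(\xi,\vec g)=(\phi(a)\xi,(ag_1,f_1g_2,f_2g_3,\dots))$. *)

(* Defs.v *)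
From HB Require Import structures.
From mathcomp Require Import all_boot all_order all_algebra.
From mathcomp Require Import complex reals.
From Stdlib Require Lists.List.
Set Implicit Arguments. Unset Strict Implicit. Unset Printing Implicit Defensive.
Import Order.TTheory GRing.Theory Num.Theory.
Local Open Scope ring_scope.

Section Defs.
Variable R : realType.
Local Notation K := (R[i]).

Definition complete_wrt (V : lmodType K) (nrm : V -> R) : Prop :=
  forall u : nat -> V,
    (forall e : R, 0 < e -> exists N : nat, forall m n : nat,
        (N <= m)%N -> (N <= n)%N -> nrm (u m - u n) < e) ->
    exists l : V, forall e : R, 0 < e -> exists N : nat, forall n : nat,
        (N <= n)%N -> nrm (u n - l) < e.

Definition cstar_axioms (V : lmodType K) (mul : V -> V -> V) (star : V -> V)
    (nrm : V -> R) : Prop :=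
  [/\
      [/\ (forall (k : K) x y z, mul (k *: x + y) z = k *: mul x z + mul y z),
          (forall (k : K) x y z, mul z (k *: x + y) = k *: mul z x + mul z y) &
          (forall x y z, mul x (mul y z) = mul (mul x y) z)],
      [/\ (forall (k : K) x y, star (k *: x + y) = (k^*)%C *: star x + star y),
          (forall x, star (star x) = x) &
          (forall x y, star (mul x y) = mul (star y) (star x))],
      [/\ (forall x, 0 <= nrm x), (forall x, nrm x = 0 -> x = 0),
          (forall x y, nrm (x + y) <= nrm x + nrm y),
          (forall (k : K) x, ((nrm (k *: x))%:C)%C = `|k| * ((nrm x)%:C)%C) &
          (forall x y, nrm (mul x y) <= nrm x * nrm y)],
      (forall x, nrm (mul (star x) x) = nrm x ^+ 2) &
      complete_wrt nrm].

Record cstarAlg := CStarAlg {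
  cs_car :> lmodType K;
  cs_mul : cs_car -> cs_car -> cs_car;
  cs_star : cs_car -> cs_car;
  cs_norm : cs_car -> R;
  cs_ax : cstar_axioms cs_mul cs_star cs_norm }.

Section Corr.
Variable A : cstarAlg.
Local Notation mulA := (@cs_mul A).
Local Notation starA := (@cs_star A).
Local Notation nrmA := (@cs_norm A).

(* right Hilbert A-module: right action ract, A-valued inner product ip;
   positivity <x,x> >= 0 in A means <x,x> = b* b for some b in A *)
Definition hilbert_module_axioms (X : lmodType K) (ract : X -> cs_car A -> X)
    (ip : X -> X -> cs_car A) : Prop :=
  [/\ [/\ (forall (k : K) x y a, ract (k *: x + y) a = k *: ract x a + ract y a),
          (forall (k : K) x a b, ract x (k *: a + b) = k *: ract x a + ract x b) &
          (forall x a b, ract (ract x a) b = ract x (mulA a b))],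
      (forall (k : K) x y z, ip x (k *: y + z) = k *: ip x y + ip x z),
      (forall x y a, ip x (ract y a) = mulA (ip x y) a),
      (forall x y, ip y x = starA (ip x y)) &
      [/\ (forall x, exists b, ip x x = mulA (starA b) b),
          (forall x, ip x x = 0 -> x = 0) &
          complete_wrt (fun x => Num.sqrt (nrmA (ip x x)))]].

Definition is_adjoint (X : Type) (ip : X -> X -> cs_car A) (S S' : X -> X) : Prop :=
  forall x y, ip (S x) y = ip x (S' y).

Definition adjointable (X : Type) (ip : X -> X -> cs_car A) (S : X -> X) : Prop :=
  exists S', is_adjoint ip S S'.

Definition left_action_axioms (X : lmodType K) (ip : X -> X -> cs_car A)
    (phi : A -> X -> X) : Prop :=
  [/\ (forall a, adjointable ip (phi a)),
      (forall a, is_adjoint ip (phi a) (phi (starA a))),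
      (forall (k : K) a b x, phi (k *: a + b) x = k *: phi a x + phi b x) &
      (forall a b x, phi (mulA a b) x = phi a (phi b x))].

Record correspondence := Correspondence {
  co_car :> lmodType K;
  co_ract : co_car -> cs_car A -> co_car;
  co_ip : co_car -> co_car -> A;
  co_phi : A -> co_car -> co_car;
  co_hilb : hilbert_module_axioms co_ract co_ip;
  co_left : left_action_axioms co_ip co_phi }.

Variable X : correspondence.
Local Notation phi := (@co_phi X).
Local Notation ract := (@co_ract X).
Local Notation ip := (@co_ip X).

Definition in_kerphi (f : cs_car A) : Prop := forall x : X, phi f x = 0.

(* T = (ker phi)^(N): c_0-sequences in ker phi.  Coordinates are indexed
   by nat, coordinate n (0-based) being the paper's coordinate n+1. *)
Definition in_tail (g : nat -> cs_car A) : Prop :=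
  (forall n, in_kerphi (g n)) /\
  (forall e : R, 0 < e -> exists N : nat, forall n : nat,
      (N <= n)%N -> nrmA (g n) < e).

Definition zseq : nat -> cs_car A := fun _ => 0.

Definition eps (i : nat) (f : cs_car A) : nat -> cs_car A :=
  fun n => if n == i then f else 0.

Definition Bty := ((cs_car A) * (nat -> cs_car A))%type.
Definition in_B (b : Bty) : Prop := in_tail b.2.
Definition in_J (b : Bty) : Prop := in_kerphi b.1 /\ in_tail b.2.

Definition addB (b c : Bty) : Bty := (b.1 + c.1, fun n => b.2 n + c.2 n).
Definition scaleB (k : K) (b : Bty) : Bty := (k *: b.1, fun n => k *: b.2 n).
Definition mulB (b c : Bty) : Bty := (mulA b.1 c.1, fun n => mulA (b.2 n) (c.2 n)).
Definition starB (b : Bty) : Bty := (starA b.1, fun n => starA (b.2 n)).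

Definition Yty := (X * (nat -> cs_car A))%type.
Definition in_Y (y : Yty) : Prop := in_tail y.2.

Definition zeroY : Yty := (0, zseq).
Definition addY (y z : Yty) : Yty := (y.1 + z.1, fun n => y.2 n + z.2 n).
Definition scaleY (k : K) (y : Yty) : Yty := (k *: y.1, fun n => k *: y.2 n).
Definition ractY (y : Yty) (b : Bty) : Yty :=
  (ract y.1 b.1, fun n => mulA (y.2 n) (b.2 n)).
Definition ipY (y z : Yty) : Bty :=
  (ip y.1 z.1, fun n => mulA (starA (y.2 n)) (z.2 n)).
(* phi_B(a, f)(xi, g) = (phi(a) xi, (a g_1, f_1 g_2, f_2 g_3, ...)) *)
Definition phiB (b : Bty) (y : Yty) : Yty :=
  (phi b.1 y.1,
   fun n => match n with
            | 0 => mulA b.1 (y.2 0%N)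
            | n'.+1 => mulA (b.2 n') (y.2 n)
            end).

Definition ThetaY (y y' : Yty) : Yty -> Yty := fun z => ractY y (ipY y' z).

Definition sumTheta (s : seq (Yty * Yty)) : Yty -> Yty :=
  fun z => foldr (fun p acc => addY (ThetaY p.1 p.2 z) acc) zeroY s.

(* ||y||_Y <= r, where ||y||^2 = ||<y,y>_B|| and
   ||(a,g)||_B = max(||a||, sup_n ||g_n||) *)
Definition normY_le (y : Yty) (r : R) : Prop :=
  0 <= r /\ nrmA (ip y.1 y.1) <= r ^+ 2 /\
  (forall n, nrmA (mulA (starA (y.2 n)) (y.2 n)) <= r ^+ 2).

(* K(Y): operator-norm closure of the span of the Theta_{y,y'} *)
Definition compactY (S : Yty -> Yty) : Prop :=
  forall e : R, 0 < e -> exists s : seq (Yty * Yty),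
    (forall p, Stdlib.Lists.List.In p s -> in_Y p.1 /\ in_Y p.2) /\
    forall z r, in_Y z -> normY_le z r ->
      normY_le (addY (S z) (scaleY (-1) (sumTheta s z))) (e * r).

Variable C : cstarAlg.
Local Notation mulC := (@cs_mul C).
Local Notation starC := (@cs_star C).

Definition is_representation (pi : Bty -> C) (t : Yty -> C) : Prop :=
  [/\
      [/\ (forall (k : K) b c, in_B b -> in_B c ->
            pi (addB (scaleB k b) c) = k *: pi b + pi c),
          (forall b c, in_B b -> in_B c -> pi (mulB b c) = mulC (pi b) (pi c)) &
          (forall b, in_B b -> pi (starB b) = starC (pi b))],
      (forall (k : K) y z, in_Y y -> in_Y z ->
          t (addY (scaleY k y) z) = k *: t y + t z),
      (forall y z, in_Y y -> in_Y z -> mulC (starC (t y)) (t z) = pi (ipY y z)),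
      (forall b y, in_B b -> in_Y y -> t (phiB b y) = mulC (pi b) (t y)) &
      (forall y b, in_Y y -> in_B b -> t (ractY y b) = mulC (t y) (pi b))].

(* pi1 is the *-homomorphism pi^(1) : K(Y) -> C with
   pi1 (Theta_{y,y'}) = t(y) t(y')^*.  Operators are functions on the
   carrier Yty; pi1 only depends on their restriction to Y. *)
Definition is_pi1 (t : Yty -> C) (pi1 : (Yty -> Yty) -> C) : Prop :=
  [/\ (forall S S', compactY S ->
          (forall z, in_Y z -> S z = S' z) -> pi1 S = pi1 S'),
      (forall (k : K) S S', compactY S -> compactY S' ->
          pi1 (fun z => addY (scaleY k (S z)) (S' z)) = k *: pi1 S + pi1 S'),
      (forall S S', compactY S -> compactY S' ->
          pi1 (fun z => S (S' z)) = mulC (pi1 S) (pi1 S')),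
      (forall S S', compactY S -> compactY S' ->
          (forall z w, in_Y z -> in_Y w -> ipY (S z) w = ipY z (S' w)) ->
          pi1 S' = starC (pi1 S)) &
      (forall y y', in_Y y -> in_Y y' ->
          pi1 (ThetaY y y') = mulC (t y) (starC (t y')))].

End Corr.
End Defs.

(* Main.v *)
Require Import Defs.
From HB Require Import structures.
From mathcomp Require Import all_boot all_order all_algebra.
From mathcomp Require Import complex reals.
From Stdlib Require Import FunctionalExtensionality.
Import Order.TTheory GRing.Theory Num.Theory.
Local Open Scope ring_scope.

Lemma self_add (V : zmodType) (x : V) : x = x + x -> x = 0.
Proof. by move=> h; apply: (addrI x); rewrite addr0 -h. Qed.

Theorem mainTheorem5 (R : realType) (A : cstarAlg R) (X : correspondence A)
    (C : cstarAlg R) (pi : Bty A -> C) (t : Yty X -> C)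
    (pi1 : (Yty X -> Yty X) -> C) :
  (* (pi, t) is a representation of Y over B in C *)
  is_representation pi t ->
  (* pi1 is the induced *-homomorphism pi^(1) : K(Y) -> C *)
  is_pi1 t pi1 ->
  (* coisometric on the ideal ker phi (+) T of B *)
  (forall b : Bty A, in_J X b -> pi1 (phiB b) = pi b) ->
  (* a |-> pi (a, 0) is injective on A *)
  (forall a a' : cs_car A, pi (a, zseq A) = pi (a', zseq A) -> a = a') ->
  forall (i : nat) (f : cs_car A),
    in_kerphi X f -> pi (0, eps i f) = 0 -> f = 0.
Proof.
move=> [[piL piM piS] tL tip tphi tract] [_ _ _ _ pTheta] coiso inj.
have [[mAl mAr mAa] [sAl sAA sAm] [n0 nz ntri nhom nsub] nCs _] := cs_ax A.
have [[mCl mCr mCa] _ _ _ _] := cs_ax C.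
have [[rl rl2 ra] ipl ipr ips [_ ipz _]] := co_hilb X.
have [_ adj phl phm] := co_left X.
have mA0r : forall z : cs_car A, cs_mul z 0 = 0.
  move=> z; apply: self_add; rewrite -[in LHS](addr0 0) -{1}(scale1r 0).
  by rewrite mAr scale1r.
have mA0l : forall z : cs_car A, cs_mul 0 z = 0.
  move=> z; apply: self_add; rewrite -[in LHS](addr0 0) -{1}(scale1r 0).
  by rewrite mAl scale1r.
have mC0r : forall z : cs_car C, cs_mul z 0 = 0.
  move=> z; apply: self_add; rewrite -[in LHS](addr0 0) -{1}(scale1r 0).
  by rewrite mCr scale1r.
have mC0l : forall z : cs_car C, cs_mul 0 z = 0.
  move=> z; apply: self_add; rewrite -[in LHS](addr0 0) -{1}(scale1r 0).
  by rewrite mCl scale1r.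
have sA0 : cs_star (0 : cs_car A) = 0.
  have := sAl 1 0 0; rewrite scale1r addr0 rmorph1 scale1r.
  exact: self_add.
have r0 : forall a : cs_car A, co_ract (0 : X) a = 0.
  move=> a; apply: self_add; rewrite -[in LHS](addr0 0) -{1}(scale1r 0).
  by rewrite rl scale1r.
have ip0 : forall x : X, co_ip x 0 = 0.
  move=> x; apply: self_add; rewrite -[in LHS](addr0 0) -{1}(scale1r 0).
  by rewrite ipl scale1r.
have ip0l : forall x : X, co_ip 0 x = 0.
  by move=> x; rewrite ips ip0 sA0.
have ph0 : forall x : X, co_phi (0 : cs_car A) x = 0.
  move=> x; apply: self_add; rewrite -[in LHS](addr0 0) -{1}(scale1r 0).
  by rewrite phl scale1r.
have pha0 : forall a : cs_car A, co_phi a (0 : X) = 0.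
  move=> a; apply: ipz; by rewrite adj ip0l.
have nA0 : cs_norm (0 : cs_car A) = 0.
  have := nhom 0 0; rewrite scale0r normr0 mul0r.
  move=> h; move: h => [->] //.
have ker0 : in_kerphi X 0 by move=> x; apply: ph0.
have kerM : forall a b, in_kerphi X b -> in_kerphi X (cs_mul a b).
  by move=> a b hb x; rewrite phm hb pha0.
have kerMl : forall a b, in_kerphi X a -> in_kerphi X (cs_mul a b).
  by move=> a b ha x; rewrite phm ha.
have kerS : forall a, in_kerphi X a -> in_kerphi X (cs_star a).
  move=> a ha x; apply: ipz.
  by rewrite adj sAA ha ip0.
have tailz : in_tail X (zseq A).
  split=> [n|e he]; first exact: ker0.
  by exists 0%N => n _; rewrite /zseq nA0.
have taile : forall j g, in_kerphi X g -> in_tail X (eps j g).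
  move=> j g hg; split=> [n|e he].
    by rewrite /eps; case: (n == j).
  exists j.+1 => n hn; rewrite /eps.
  have -> : (n == j) = false by apply/negbTE; rewrite neq_ltn hn orbT.
  by rewrite nA0.
have star0 : forall g : cs_car A, cs_mul (cs_star g) g = 0 -> g = 0.
  move=> g h; apply: nz; have := nCs g; rewrite h nA0 => /esym/eqP.
  by rewrite sqrf_eq0 => /eqP.
have final : forall f : cs_car A, cs_mul (cs_mul (cs_star f) f) (cs_star (cs_mul (cs_star f) f)) = 0 -> f = 0.
  move=> f; have hs : cs_star (cs_mul (cs_star f) f) = cs_mul (cs_star f) f.
    by rewrite (sAm (cs_star f) f) sAA.
  rewrite hs -{1}hs => /star0 h; exact: star0.
have tvan : forall j (f : cs_car A), in_kerphi X f -> pi (0, eps j f) = 0 ->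
    t (0, eps j (cs_mul (cs_star f) f)) = 0.
  move=> j f hf hp.
  have := tract (0, eps j (cs_star f)) (0, eps j f) (taile _ _ (kerS _ hf)) (taile _ _ hf).
  rewrite hp mC0r => <-; rewrite /ractY /=; congr (t (_, _)); first by rewrite r0.
  apply: functional_extensionality => n; rewrite /eps; case: (n == j) => //.
have pi00 : pi (0, zseq A) = 0.
  have e : (0, zseq A) = addB (scaleB 1 (0, zseq A)) (0, zseq A).
    rewrite /addB /scaleB /=; congr pair; first by rewrite scale1r addr0.
    by apply: functional_extensionality => n; rewrite /zseq scale1r addr0.
  apply: self_add; rewrite {1}e piL // scale1r //.
elim=> [|i IH] f hf hp.
  have := tvan 0%N f hf hp; set h := cs_mul (cs_star f) f => th.
  have hh : in_kerphi X h by apply: kerM.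
  apply: final; apply: inj; rewrite pi00 -coiso; last first.
    by split=> //; apply: kerMl.
  have := pTheta (0, eps 0 h) (0, eps 0 h) (taile _ _ hh) (taile _ _ hh).
  rewrite th mC0l => <-; congr pi1.
  apply: functional_extensionality => z.
  rewrite /phiB /ThetaY /ractY /ipY /=; congr (_, _).
    by rewrite r0 (kerMl _ _ hh).
  apply: functional_extensionality => -[|n] /=; rewrite /eps /=.
    by rewrite mAa.
  by rewrite /zseq !mA0l.
have := tvan i.+1 f hf hp; set h := cs_mul (cs_star f) f => th.
have hh : in_kerphi X h by apply: kerM.
apply: final; apply: IH; first by apply: kerMl.
rewrite -coiso; last by split=> //; apply: taile; apply: kerMl.
have := pTheta (0, eps i.+1 h) (0, eps i.+1 h) (taile _ _ hh) (taile _ _ hh).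
rewrite th mC0l => <-; congr pi1.
apply: functional_extensionality => z.
rewrite /phiB /ThetaY /ractY /ipY /=; congr (_, _).
  by rewrite r0 ph0.
apply: functional_extensionality => -[|n] /=; rewrite /eps /=.
  by rewrite !mA0l.
rewrite eqSS; case: (n == i); first by rewrite mAa.
by rewrite sA0 !mA0l.
Qed.
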